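(* With the notation of the context, the conditional probability density of $u_T[\theta]$ given the $n-1$ previous values is $$p_u\big(u_T[\theta]\,\big|\,\{u_T[\theta-i]\}_{i=1}^{n-1}\big)=\frac{\mathcal F^{-1}_{\{\omega_i\}}\big\{e^{I_{w,\beta_{\mathrm L,T}}(\omega_0,\omega_1,\dots,\omega_{n-1})}\big\}\big(\{u_T[\theta-i]\}_{i=0}^{n-1}\big)}{\mathcal F^{-1}_{\{\omega_i\}}\big\{e^{I_{w,\beta_{\mathrm L,T}}(0,\omega_1,\dots,\omega_{n-1})}\big\}\big(\{u_T[\theta-i]\}_{i=1}^{n-1}\big)},$$ where $$I_{w,\beta_{\mathrm L,T}}(\omega_0,\dots,\omega_{n-1})=\int_{\mathbb R}f\Big(\sum_{i=0}^{n-1}\omega_i\,\beta_{\mathrm L,T}(x-iT)\Big)dx,$$ the inverse Fourier transform in the numerator is $n$-dimensional in $(\omega_0,\dots,\omega_{n-1})$ and in the denominator $(n-1)$-dimensional in $(\omega_1,\dots,\omega_{n-1})$.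
   Context: Innovation process: $w$ is a generalized random process on $\mathcal S(\mathbb R)$ with characteristic form $\mathbb E\{e^{-j\langle w,\varphi\rangle}\}=\exp\big(\int_{\mathbb R}f(\varphi(x))dx\big)$, where $f(\omega)=-\frac{\sigma^2}{2}\omega^2+\int_{\mathbb R\setminus\{0\}}(\cos(a\omega)-1)v(a)\,da$ ($\sigma\ge0$, $v$ symmetric nonnegative with $\int\min(1,a^2)v(a)da<\infty$). Joint densities of pairings are obtained by inverse Fourier transform of the characteristic form: the joint density of $(\langle w,\varphi_1\rangle,\dots,\langle w,\varphi_k\rangle)$ has Fourier transform (with kernel $e^{-j\sum\omega_ix_i}$) equal to $\mathbb E\{e^{-j\langle w,\sum_i\omega_i\varphi_i\rangle}\}$. $\mathrm L=\lambda_n\prod_{i=1}^n(\mathrm D-r_i\mathrm I)$ with $\Re r_i\le0$; $d_T[0..n]$ are the coefficients of $\lambda_n\prod_{i=1}^n(1-e^{r_iT}z^{-1})$; $\beta_{\mathrm L,T}$ is the impulse response of $\mathrm L_{d,T}\mathrm L^{-1}$ (the L-spline, supported in $[0,nT)$), where $\mathrm L^{-1}$ is a right inverse of $\mathrm L$ given by a kernel as usual and $\mathrm L_{d,T}$ has impulse response $\sum_kd_T[k]\delta(\cdot-kT)$. For $s=\mathrm L^{-1}w$, $u_T[i]=\sum_kd_T[k]s((i-k)T)=\langle w,\beta_{\mathrm L,T}(iT-\cdot)\rangle$. The relevant densities are assumed to exist. *)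

(* Defs.v *)
From HB Require Import structures.
From mathcomp Require Import all_boot all_order all_algebra.
From mathcomp Require Import all_classical all_reals all_analysis.
From mathcomp Require Import complex.

Set Implicit Arguments.
Unset Strict Implicit.
Unset Printing Implicit Defensive.

Import Order.TTheory GRing.Theory Num.Theory.
Local Open Scope ring_scope.
Local Open Scope classical_set_scope.

Section Defs.
Variable R : realType.

Local Notation leb := (@lebesgue_measure R).

Definition levy_exponent (sigma : R) (v : R -> R) (w : R) : R :=
  - (sigma ^+ 2 / 2) * w ^+ 2
  + Rintegral leb [set~ 0] (fun a => (cos (a * w) - 1) * v a).

(* Class of test functions on which the pairing <w, phi> is used:
   measurable, bounded, compactly supported (contains the L-spline and
   all finite linear combinations of its shifts / reflections). *)
Definition test_fun (phi : R -> R) : Prop :=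
  [/\ measurable_fun setT phi,
      exists M : R, forall x, `|phi x| <= M
    & exists K : R, forall x, K < `|x| -> phi x = 0].

(* E{ e^{-j X} } for a real random variable X, as a complex number *)
Definition cexp_mj d (Omega : measurableType d) (P : probability Omega R)
  (X : Omega -> R) : R[i] :=
  Complex (Rintegral P setT (fun o => cos (X o)))
          (- Rintegral P setT (fun o => sin (X o))).

(* Iterated Lebesgue integral over the first k coordinates
   (omega_0, ..., omega_{k-1}) of a function of a nat-indexed vector;
   d omega_0 is the outermost integral. *)
Fixpoint iter_int (k : nat) (F : (nat -> R) -> R) : R :=
  match k with
  | 0 => F (fun _ => 0)
  | k'.+1 => Rintegral leb setT
       (fun t => iter_int k' (fun y => F (fun i => if i is j.+1 then y j else t)))
  end.

(* k-dimensional inverse Fourier transform (kernel e^{+j sum_i w_i x_i}):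
   F^{-1}{g}(x) = (2 pi)^{-k} int_{R^k} g(w) e^{j sum_{i<k} w_i x_i} dw,
   written out in real and imaginary parts. *)
Definition invFT (k : nat) (g : (nat -> R) -> R[i]) (x : nat -> R) : R[i] :=
  let s w := \sum_(i < k) w i * x i in
  ((2 * pi) ^- k)%:C%C *
  Complex
    (iter_int k (fun w => complex.Re (g w) * cos (s w) - complex.Im (g w) * sin (s w)))
    (iter_int k (fun w => complex.Re (g w) * sin (s w) + complex.Im (g w) * cos (s w))).

(* Joint characteristic function of the pairings
   (<w,phi_0>, ..., <w,phi_{k-1}>):  w |-> E{ e^{-j <w, sum_i w_i phi_i>} } *)
Definition pairing_cf d (Omega : measurableType d) (P : probability Omega R)
  (W : (R -> R) -> Omega -> R) (k : nat) (phis : nat -> R -> R)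
  (w : nat -> R) : R[i] :=
  cexp_mj P (W (fun y => \sum_(i < k) w i * phis i y)).

Definition pairing_density d (Omega : measurableType d)
  (P : probability Omega R) (W : (R -> R) -> Omega -> R) (k : nat)
  (phis : nat -> R -> R) (x : nat -> R) : R[i] :=
  invFT k (pairing_cf P W k phis) x.

Definition cond_density d (Omega : measurableType d)
  (P : probability Omega R) (W : (R -> R) -> Omega -> R) (n : nat)
  (phis : nat -> R -> R) (x : nat -> R) : R[i] :=
  pairing_density P W n phis x /
  pairing_density P W n.-1 (fun j => phis j.+1) (fun j => x j.+1).

(* u_T[i] = < w, beta(iT - .) > : the test function beta(iT - .) *)
Definition uT_test (beta : R -> R) (T : R) (i : int) : R -> R :=
  fun y => beta (i%:~R * T - y).

Definition I_wbeta (f : R -> R) (beta : R -> R) (T : R) (n : nat)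
  (w : nat -> R) : R :=
  Rintegral leb setT (fun x => f (\sum_(i < n) w i * beta (x - i%:R * T))).

End Defs.

(* Main.v *)
Require Import Defs.
From HB Require Import structures.
From mathcomp Require Import all_boot all_order all_algebra.
From mathcomp Require Import all_classical all_reals all_analysis.
From mathcomp Require Import complex.
Import Order.TTheory GRing.Theory Num.Theory.
Local Open Scope ring_scope.
Local Open Scope classical_set_scope.

From mathcomp Require Import lra.

Section S.
Variable (R : realType) (c : R).
Let phi : measurableTypeR R -> measurableTypeR R := fun x : R => c - x.
Lemma mphi : measurable_fun setT phi.
Proof. apply: measurable_realfun.measurable_funB => //. Qed.
Lemma leb_refl (A : set R) : measurable A ->
  @lebesgue_measure R (phi @^-1` A) = @lebesgue_measure R A.
Proof.
move=> mA.
pose mu0 := (@pushforward _ _ _ _ _ (@lebesgue_measure R) phi : {measure set _ -> \bar R}).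
pose mu := mu0 mphi.
have H : forall X, ocitv X -> lebesgue_measure X = mu X.
  move=> X [[a b] _ <-] /=.
  rewrite /mu /mu0 /pushforward /=.
  have -> : phi @^-1` `]a, b] = `[c - b, c - a[.
    apply/seteqP; split => x /=; rewrite /phi !in_itv /= => /andP[h1 h2];
      apply/andP; split; lra.
  rewrite !lebesgue_measure_itv /= !lte_fin.
  have -> : (c - b < c - a) = (a < b) by apply/idP/idP => h; lra.
  by case: ifP => // _; rewrite -EFinB; congr (_%:E); lra.
have := lebesgue_measure_unique H mA.
by rewrite /mu /mu0 /pushforward /= => ->.
Qed.

Import HBNNSimple.
Definition reflf (h : R -> R) : measurableTypeR R -> R := fun x => h (c - x).
Section H.
Variable h : {nnsfun measurableTypeR R >-> R}.
Lemma reflf_m : measurable_fun setT (reflf h).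
Proof. exact: (measurableT_comp (measurable_funPT h) mphi). Qed.
HB.instance Definition _ := isMeasurableFun.Build _ _ _ _ (reflf h) reflf_m.
Lemma reflf_fin : finite_set (range (reflf h)).
Proof.
apply: (sub_finite_set _ (fimfunP h)) => _ [x _ <-]; by exists (c - x).
Qed.
HB.instance Definition _ := FiniteImage.Build _ _ (reflf h) reflf_fin.
Lemma reflf_ge0 x : 0 <= reflf h x.
Proof. by rewrite /reflf. Qed.
HB.instance Definition _ := isNonNegFun.Build _ _ (reflf h) reflf_ge0.
Lemma sintegral_refl : sintegral (@lebesgue_measure R) (reflf h) = sintegral (@lebesgue_measure R) h.
Proof.
rewrite /sintegral; apply: eq_fsbigr => x _.
rewrite (_ : reflf h @^-1` [set x] = phi @^-1` (h @^-1` [set x])) //.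
rewrite leb_refl //; exact: (measurable_funPTI h (measurable_set1 x)).
Qed.
End H.
Local Open Scope ereal_scope.
Definition nnint (g : measurableTypeR R -> \bar R) :=
  ereal_sup [set sintegral (@lebesgue_measure R) h | h in
    [set h : {nnsfun measurableTypeR R >-> R} | forall x, (h x)%:E <= g x]].
Lemma nnint_le (g : measurableTypeR R -> \bar R) : nnint (fun x => g (c - x)%R) <= nnint g.
Proof.
apply: ge_ereal_sup => _ [h hle <-]; apply: ereal_sup_ubound.
exists [the {nnsfun _ >-> R} of reflf h]; last exact: sintegral_refl.
move=> x /=; rewrite /reflf; by have := hle (c - x)%R; rewrite subKr.
Qed.
Lemma nnint_eq (g : measurableTypeR R -> \bar R) : nnint (fun x => g (c - x)%R) = nnint g.
Proof.
apply/eqP; rewrite eq_le nnint_le /=.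
have := nnint_le (fun x => g (c - x)%R).
by rewrite (_ : (fun x => g (c - (c - x))%R) = g) // ; apply: funext => x; rewrite subKr.
Qed.
Lemma ge0_intE (g : measurableTypeR R -> \bar R) : (forall x, 0 <= g x) ->
  \int[@lebesgue_measure R]_x g x = nnint g.
Proof. exact: ge0_integralTE. Qed.
Lemma integral_refl (g : measurableTypeR R -> \bar R) :
  \int[@lebesgue_measure R]_x g (c - x)%R = \int[@lebesgue_measure R]_x g x.
Proof.
rewrite integralE [RHS]integralE.
rewrite !ge0_intE // -(nnint_eq (g^\+)) -(nnint_eq (g^\-)) //.
congr (nnint _ - nnint _); apply: funext => x; by rewrite ?funeposE ?funenegE.
Qed.
Local Close Scope ereal_scope.
Lemma Rintegral_refl (F : R -> R) :
  Rintegral (@lebesgue_measure R) setT (fun x => F (c - x)%R) =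
  Rintegral (@lebesgue_measure R) setT F.
Proof. by rewrite /Rintegral (integral_refl (fun x => (F x)%:E)). Qed.
End S.


Lemma test_comb (R : realType) (beta : R -> R) (k : nat) (w a : nat -> R) :
  test_fun beta -> test_fun (fun y => \sum_(i < k) w i * beta (a i - y)).
Proof.
case=> mb [M hM] [K hK]; split.
- elim: k => [|k IH].
    rewrite (_ : (fun _ => _) = cst 0); last by apply: funext => y; rewrite big_ord0.
    exact: measurable_cst.
  rewrite (_ : (fun _ => _) = (fun y => \sum_(i < k) w i * beta (a i - y)) \+
       (fun y => w k * beta (a k - y))); last first.
    by apply: funext => y; rewrite big_ord_recr.
  apply: measurable_realfun.measurable_funD => //.
  apply: measurable_realfun.measurable_funM => //.
  apply: measurableT_comp => //.
  exact: measurable_realfun.measurable_funB.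
- exists (\sum_(i < k) `|w i| * M) => x.
  apply: le_trans (ler_norm_sum _ _ _) _.
  apply: ler_sum => i _; rewrite normrM; apply: ler_wpM2l => //.
- exists (K + \sum_(i < k) `|a i|) => y hy.
  apply: big1 => i _.
  have ai : `|a i| <= \sum_(j < k) `|a j|.
    by rewrite (bigD1 i) //= ler_wpDr // sumr_ge0.
  rewrite hK ?mulr0 //.
  have : `|y| <= `|y - a i| + `|a i|.
    by have := ler_normD (y - a i) (a i); rewrite subrK.
  rewrite distrC; lra.
Qed.

Theorem theorem2 (R : realType) (d : measure_display) (Omega : measurableType d)
  (P : probability Omega R) (W : (R -> R) -> Omega -> R)
  (sigma : R) (v : R -> R) (beta : R -> R) (T : R) (n : nat) (theta : int) :
  0 <= sigma ->
  (forall a, 0 <= v a) ->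
  (forall a, v (- a) = v a) ->
  measurable_fun setT v ->
  (\int[@lebesgue_measure R]_(a in [set~ 0%R]) ((Num.min 1 (a ^+ 2) * v a)%R)%:E < +oo)%E ->
  (forall phi, test_fun phi -> measurable_fun setT (W phi)) ->
  (forall phi, test_fun phi ->
     cexp_mj P (W phi) =
     (expR (Rintegral (@lebesgue_measure R) setT
              (fun x => levy_exponent sigma v (phi x))))%:C%C) ->
  0 < T -> (0 < n)%N -> test_fun beta ->
  forall x : nat -> R,
    cond_density P W n (fun i : nat => uT_test beta T (theta - i%:Z)) x =
    invFT n (fun w => (expR (I_wbeta (levy_exponent sigma v) beta T n w))%:C%C) x /
    invFT n.-1
      (fun w => (expR (I_wbeta (levy_exponent sigma v) beta T n
                         (fun i => if i is j.+1 then w j else 0)))%:C%C)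
      (fun j => x j.+1).

Proof.
move=> _ _ _ _ _ _ Hcf _ n0 tb x.
case: n n0 x => [//|n] _ x.
rewrite /cond_density /pairing_density /=.
congr (_ / _); congr (invFT _ _ _); apply: funext => w; rewrite /pairing_cf Hcf.
- congr ((expR _)%:C%C).
  rewrite /I_wbeta -(@Rintegral_refl R (theta%:~R * T)).
  congr (Rintegral _ _ _); apply: funext => y; congr (levy_exponent _ _ _).
  apply: eq_bigr => i _; rewrite /uT_test; congr (_ * beta _).
  rewrite rmorphB /= mulrBl -pmulrn; lra.
- exact: (test_comb R beta n.+1 w (fun i : nat => (theta - i%:Z)%:~R * T) tb).
- congr ((expR _)%:C%C).
  rewrite /I_wbeta -(@Rintegral_refl R (theta%:~R * T)).
  congr (Rintegral _ _ _); apply: funext => y; congr (levy_exponent _ _ _).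
  rewrite big_ord_recl /= mul0r add0r.
  apply: eq_bigr => i _; rewrite /uT_test /bump /=; congr (_ * beta _).
  rewrite rmorphB /= mulrBl -!pmulrn; lra.
- exact: (test_comb R beta n (fun j => w j) (fun i : nat => (theta - i.+1%:Z)%:~R * T) tb).
Qed.
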